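(* Let $0\le\mu<L<+\infty$, $N\ge1$, $R\ge0$, let $H=\{h_{i,k}\}$ define a fixed-step method with $N$ steps, and let $b\in\mathbb{R}^{N+1}$, $C\in\mathbb{S}^{N+2}$. Then the supremum defining $w^{sdp}_{\mu,L}(R,H,N,b,C)$ is finite and attained by some feasible $(G,f)$.
   Context: Fixed-step method with $N$ steps: scalars $h_{i,k}$ for $1\le i\le N$, $0\le k\le N-1$, with $h_{i,k}=0$ for $k\ge i$ (a lower-triangular $H\in\mathbb{R}^{N\times N}$). Let $I=\{0,1,\dots,N,*\}$ and $e_1,\dots,e_{N+2}$ the standard basis of $\mathbb{R}^{N+2}$. For $i=0,\dots,N$ let $h_i=(-h_{i,0},\dots,-h_{i,i-1},0,\dots,0,1)^{\top}\in\mathbb{R}^{N+2}$ (last entry $1$) and $u_i=e_{i+1}$; let $h_*=u_*=0$. For $i,j\in I$ define the symmetric matrix $A_{ij}$ by $2A_{ij}=\frac{L}{L-\mu}\big(u_j(h_i-h_j)^{\top}+(h_i-h_j)u_j^{\top}\big)+\frac{1}{L-\mu}(u_i-u_j)(u_i-u_j)^{\top}+\frac{\mu}{L-\mu}\big(u_i(h_j-h_i)^{\top}+(h_j-h_i)u_i^{\top}\big)+\frac{L\mu}{L-\mu}(h_i-h_j)(h_i-h_j)^{\top}$, and $A_R=e_{N+2}e_{N+2}^{\top}$. Then $w^{sdp}_{\mu,L}(R,H,N,b,C)$ is the supremum of $b^{\top}f+\mathrm{Tr}(CG)$ over $G\in\mathbb{S}^{N+2}$ (symmetric matrices), $f=(f_0,\dots,f_N)\in\mathbb{R}^{N+1}$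 subject to $f_j-f_i+\mathrm{Tr}(GA_{ij})\le0$ for all $i,j\in I$ (with $f_*:=0$), $\mathrm{Tr}(GA_R)\le R^2$, and $G\succeq0$. *)

(* Defs.v *)
From HB Require Import structures.
From mathcomp Require Import all_boot all_order all_algebra.
From mathcomp Require Import reals.
Set Implicit Arguments. Unset Strict Implicit. Unset Printing Implicit Defensive.
Import Order.TTheory GRing.Theory Num.Theory.
Local Open Scope ring_scope.

Section PEP.
Variables (R : realType) (N : nat).

(* The method H is an N x N matrix; row r (0-based) stores h_{r+1, .}:
   H r k = h_{r+1,k}.  hentry H a k returns h_{a+1,k} (0 outside range). *)
Definition hentry (H : 'M[R]_N) (a k : nat) : R :=
  match @insub _ (fun x => x < N)%N _ a, @insub _ (fun x => x < N)%N _ k with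
  | Some i, Some j => H i j
  | _, _ => 0
  end.

(* Strict lower triangularity: h_{i,k} = 0 for k >= i (i 1-based). *)
Definition fixed_step (H : 'M[R]_N) : Prop :=
  forall r k : 'I_N, (r < k)%N -> H r k = 0.

(* h_i = (-h_{i,0},...,-h_{i,i-1},0,...,0,1) in R^{N+2}, for i = 0..N
   (0-based coordinates 0..N+1). *)
Definition hvec (H : 'M[R]_N) (i : 'I_N.+1) : 'cV[R]_N.+2 :=
  \col_(j < N.+2)
    (if j == ord_max then 1
     else if (j < i)%N then - hentry H i.-1 j else 0).

(* u_i = e_{i+1} (1-based), i.e. 0-based coordinate i. *)
Definition uvec (i : 'I_N.+1) : 'cV[R]_N.+2 :=
  \col_(j < N.+2) (if (j == i :> nat) then 1 else 0).

(* Index set I = {0,...,N,*}; None stands for *. *)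
Definition hI (H : 'M[R]_N) (o : option 'I_N.+1) : 'cV[R]_N.+2 :=
  if o is Some i then hvec H i else 0.
Definition uI (o : option 'I_N.+1) : 'cV[R]_N.+2 :=
  if o is Some i then uvec i else 0.
Definition fI (f : 'cV[R]_N.+1) (o : option 'I_N.+1) : R :=
  if o is Some i then f i 0 else 0.

Definition Amat (mu L : R) (H : 'M[R]_N) (i j : option 'I_N.+1) : 'M[R]_N.+2 :=
  let hi := hI H i in let hj := hI H j in
  let ui := uI i in let uj := uI j in
  2^-1 *:
   ( (L / (L - mu)) *: (uj *m (hi - hj)^T + (hi - hj) *m uj^T)
   + (1 / (L - mu)) *: ((ui - uj) *m (ui - uj)^T)
   + (mu / (L - mu)) *: (ui *m (hj - hi)^T + (hj - hi) *m ui^T)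
   + (L * mu / (L - mu)) *: ((hi - hj) *m (hi - hj)^T) ).

Definition ARmat : 'M[R]_N.+2 := delta_mx ord_max ord_max.

Definition sym_mx (G : 'M[R]_N.+2) : Prop := G^T = G.

Definition psd (G : 'M[R]_N.+2) : Prop :=
  forall x : 'cV[R]_N.+2, 0 <= (x^T *m G *m x) 0 0.

Definition sdp_feasible (mu L Rad : R) (H : 'M[R]_N)
    (G : 'M[R]_N.+2) (f : 'cV[R]_N.+1) : Prop :=
  [/\ sym_mx G, psd G,
      (forall i j : option 'I_N.+1, fI f j - fI f i + \tr (G *m Amat mu L H i j) <= 0)
    & \tr (G *m ARmat) <= Rad ^+ 2].

Definition sdp_obj (b : 'cV[R]_N.+1) (C : 'M[R]_N.+2)
    (G : 'M[R]_N.+2) (f : 'cV[R]_N.+1) : R :=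
  \sum_(i < N.+1) b i 0 * f i 0 + \tr (C *m G).

End PEP.

(* Main.v *)
Require Import Defs.
From HB Require Import structures.
From mathcomp Require Import all_boot all_order all_algebra.
From mathcomp Require Import reals.
From mathcomp Require Import all_classical all_reals all_analysis.
From mathcomp Require Import ring lra zify.
Import Order.TTheory GRing.Theory Num.Theory.
Import numFieldNormedType.Exports.
Local Open Scope ring_scope.
Set Implicit Arguments. Unset Strict Implicit.

Section Alg.
Variables (R : realType) (n : nat).
Implicit Types (G : 'M[R]_n) (x y z : 'cV[R]_n).

Definition bil G x y := (x^T *m G *m y) 0 0.

Lemma bilE G x y : bil G x y = \sum_i \sum_j x i 0 * G i j * y j 0.
Proof.
rewrite /bil mxE.
under eq_bigr do rewrite mxE big_distrl /=.
rewrite exchange_big /=; apply: eq_bigr => i _; apply: eq_bigr => j _.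
by rewrite !mxE.
Qed.

Lemma bilDl G x y z : bil G (x + y) z = bil G x z + bil G y z.
Proof. by rewrite /bil linearD /= !mulmxDl mxE. Qed.
Lemma bilDr G x y z : bil G z (x + y) = bil G z x + bil G z y.
Proof. by rewrite /bil !mulmxDr mxE. Qed.
Lemma bilZl G a x z : bil G (a *: x) z = a * bil G x z.
Proof. by rewrite /bil linearZ /= -!scalemxAl mxE. Qed.
Lemma bilZr G a x z : bil G z (a *: x) = a * bil G z x.
Proof. by rewrite /bil -!scalemxAr mxE. Qed.
Lemma bilNl G x z : bil G (- x) z = - bil G x z.
Proof. by rewrite -scaleN1r bilZl mulN1r. Qed.
Lemma bilNr G x z : bil G z (- x) = - bil G z x.
Proof. by rewrite -scaleN1r bilZr mulN1r. Qed.
Lemma bilBl G x y z : bil G (x - y) z = bil G x z - bil G y z.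
Proof. by rewrite bilDl bilNl. Qed.
Lemma bilBr G x y z : bil G z (x - y) = bil G z x - bil G z y.
Proof. by rewrite bilDr bilNr. Qed.
Lemma bil0l G z : bil G 0 z = 0.
Proof. by rewrite -(scale0r 0) bilZl mul0r. Qed.
Lemma bil0r G z : bil G z 0 = 0.
Proof. by rewrite -(scale0r 0) bilZr mul0r. Qed.


Lemma trace_outer G a b : \tr (G *m (a *m b^T)) = bil G b a.
Proof.
rewrite mulmxA mxtrace_mulC /bil mulmxA /mxtrace big_ord1 //.
Qed.
End Alg.
Section T. Variables (R : realType) (n : nat).
Lemma bilC (G : 'M[R]_n) x y : G^T = G -> bil G x y = bil G y x.
Proof.
move=> sG; rewrite /bil.
have -> : (x^T *m G *m y) 0 0 = ((x^T *m G *m y)^T) 0 0 by rewrite [RHS]mxE.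
by rewrite !trmx_mul trmxK sG mulmxA.
Qed.
End T.
Section P.
Variables (R : realType) (N : nat) (mu L : R) (H : 'M[R]_N).
Hypotheses (mu0 : 0 <= mu) (muL : mu < L).

Lemma trA (G : 'M[R]_N.+2) i j :
  let hi := hI H i in let hj := hI H j in let ui := uI R i in let uj := uI R j in
  \tr (G *m Amat mu L H i j) = 2^-1 * (L/(L-mu) * (bil G (hi-hj) uj + bil G uj (hi-hj))
    + 1/(L-mu) * bil G (ui-uj) (ui-uj) + mu/(L-mu) * (bil G (hj-hi) ui + bil G ui (hj-hi))
    + L*mu/(L-mu) * bil G (hi-hj) (hi-hj)).
Proof.
rewrite /Amat /= -scalemxAr mxtraceZ !mulmxDr !mxtraceD -!scalemxAr !mxtraceZ.
by rewrite !mulmxDr !mxtraceD !trace_outer.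
Qed.

Lemma key (G : 'M[R]_N.+2) (f : 'cV[R]_N.+1) k :
  G^T = G ->
  (forall i j, fI f j - fI f i + \tr (G *m Amat mu L H i j) <= 0) ->
  bil G (uvec R k) (uvec R k) - (L + mu) * bil G (uvec R k) (hvec H k)
    + L * mu * bil G (hvec H k) (hvec H k) <= 0.
Proof.
move=> sG C; have C1 := C None (Some k); have C2 := C (Some k) None.
move: C1 C2; rewrite !trA /= !sub0r !subr0 !bilNl !bilNr !bil0l !bil0r opprK.
rewrite (bilC _ _ sG) => C1 C2.
have d0 : 0 < L - mu by rewrite subr_gt0.
set q := bil G (uvec R k) (uvec R k) in C1 C2 *.
set b := bil G (uvec R k) (hvec H k) in C1 C2 *.
set p := bil G (hvec H k) (hvec H k) in C1 C2 *.
have : (q - (L + mu) * b + L * mu * p) / (L - mu) <= 0.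
  move: (lerD C1 C2); rewrite /= ?subr0 ?sub0r ?addr0.
  set E := (X in X <= _ -> _); have -> : E = (q - (L + mu) * b + L * mu * p) / (L - mu).
    by rewrite /E; field; rewrite lt0r_neq0.
  by [].
by rewrite pmulr_lle0 // invr_gt0.
Qed.
End P.
Section Q.
Variables (R : realType) (n : nat).
Definition ev (a : 'I_n) : 'cV[R]_n := \col_j ((j == a)%:R).

Lemma bil_e (G : 'M[R]_n) a b : bil G (ev a) (ev b) = G a b.
Proof.
rewrite bilE (bigD1 a) //= [X in _ + X = _]big1; last first.
  move=> i ia; apply: big1 => j _; rewrite !mxE (negbTE ia) mul0r mul0r //.
rewrite addr0 (bigD1 b) //= [X in _ + X = _]big1; last first.
  by move=> j jb; rewrite !mxE (negbTE jb) mulr0.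
by rewrite !mxE !eqxx mul1r mulr1 addr0.
Qed.

Variable G : 'M[R]_n.
Hypotheses (sG : G^T = G) (pG : forall x, 0 <= bil G x x).

Lemma diag_ge0 a : 0 <= G a a.
Proof. by rewrite -bil_e. Qed.

Lemma offdiag a b : `|G a b| <= (G a a + G b b) / 2.
Proof.
have h1 := pG (ev a + ev b); have h2 := pG (ev a - ev b).
move: h1 h2; rewrite !bilDl !bilDr ?bilNl ?bilNr !bil_e => h1 h2.
have Gba : G b a = G a b by rewrite -[in LHS]sG mxE.
rewrite Gba in h1 h2; rewrite ler_norml; apply/andP; split; lra.
Qed.

Lemma Qbound (x : 'cV[R]_n) (D : R) : (forall i, x i 0 != 0 -> G i i <= D) ->
  bil G x x <= (\sum_i `|x i 0|) ^+ 2 * D.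
Proof.
move=> hD; rewrite bilE expr2 big_distrl /= big_distrl /=.
apply: ler_sum => i _; rewrite big_distrr /= big_distrl /=; apply: ler_sum => j _.
have [->|xi0] := eqVneq (x i 0) 0; first by rewrite !mul0r normr0 !mul0r.
have [->|xj0] := eqVneq (x j 0) 0; first by rewrite !mulr0 normr0 mulr0 mul0r.
have Dij : `|G i j| <= D.
  apply: le_trans (offdiag i j) _; have := hD _ xi0; have := hD _ xj0; lra.
apply: le_trans (ler_norm _) _; rewrite !normrM.
have h1 : 0 <= `|x i 0| * `|x j 0| by rewrite mulr_ge0.
have := ler_wpM2l h1 Dij.
by rewrite -!mulrA [`|G i j| * _]mulrC.
Qed.
End Q.
Arguments ev {R n} a.
Section B.
Variables (R : realType) (N : nat) (mu L Rad : R) (H : 'M[R]_N).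
Hypotheses (mu0 : 0 <= mu) (muL : mu < L) (Rad0 : 0 <= Rad).

Lemma hvec_supp k (i : 'I_N.+2) : hvec H k i 0 != 0 -> i = ord_max \/ (i < k)%N.
Proof.
rewrite mxE; have [->|_] := eqVneq i ord_max; first by left.
case: ltnP => [_ _|_]; [by right | by rewrite eqxx].
Qed.

Lemma uvec_ev k : uvec R k = ev (n:=N.+2) (widen_ord (leqnSn _) k).
Proof. by apply/matrixP => i j; rewrite !mxE -val_eqE /=; case: eqP. Qed.

Lemma trAR (G : 'M[R]_N.+2) : \tr (G *m ARmat R N) = G ord_max ord_max.
Proof.
rewrite /ARmat /mxtrace (bigD1 ord_max) //= big1 => [|i /negbTE ni].
  rewrite addr0 mxE (bigD1 ord_max) //= big1 => [|j /negbTE nj].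
    by rewrite mxE !eqxx mulr1 addr0.
  by rewrite mxE nj mulr0.
rewrite mxE; apply: big1 => j _; rewrite mxE ni andbF mulr0 //.
Qed.

Lemma quad (G : 'M[R]_N.+2) f k : sdp_feasible mu L Rad H G f ->
  G (widen_ord (leqnSn _) k) (widen_ord (leqnSn _) k)
   <= (L + mu) ^+ 2 * bil G (hvec H k) (hvec H k).
Proof.
case=> sG pG C _.
have K := key (H:=H) muL k sG C.
rewrite -bil_e -uvec_ev.
have pG' : forall x, 0 <= bil G x x by [].
have hp := pG' (hvec H k).
have h2 := pG' (uvec R k - (L + mu) *: hvec H k).
move: h2; rewrite !bilDl !bilDr ?bilNl ?bilNr !bilZl !bilZr [bil _ (hvec H k) (uvec R k)]bilC // => h2.
move: K h2.
set q := bil G (uvec R k) (uvec R k).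
set b := bil G (uvec R k) (hvec H k).
set p := bil G (hvec H k) (hvec H k).
move=> K h2.
have Lp : 0 <= L * mu * p by rewrite mulr_ge0 // mulr_ge0 // (le_trans mu0 (ltW muL)).
nra.
Qed.
End B.
Section D.
Variables (R : realType) (N : nat) (mu L Rad : R) (H : 'M[R]_N).
Hypotheses (mu0 : 0 <= mu) (muL : mu < L) (Rad0 : 0 <= Rad).

Definition sk (k : 'I_N.+1) := (\sum_i `|hvec H k i 0|) ^+ 2.
Definition Sc := 1 + (L + mu) ^+ 2 * \sum_k sk k.

Lemma Sc_ge1 : 1 <= Sc.
Proof.
rewrite /Sc lerDl mulr_ge0 ?sqr_ge0 //; apply: sumr_ge0 => k _; exact: sqr_ge0.
Qed.

Lemma diag_bound G f : sdp_feasible mu L Rad H G f ->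
  forall i, G i i <= Sc ^+ N.+1 * Rad ^+ 2.
Proof.
move=> F; have [sG pG C AR] := F.
have pG' : forall x, 0 <= bil G x x by [].
have S1 := Sc_ge1.
have R2 : 0 <= Rad ^+ 2 by rewrite sqr_ge0.
suff P : forall m, (m <= N.+1)%N -> forall i : 'I_N.+2,
    (i == ord_max) || (i < m)%N -> G i i <= Sc ^+ m * Rad ^+ 2.
  move=> i; apply: P => //; have [//|ne] := eqVneq i ord_max.
  move: ne; rewrite -val_eqE /= => /eqP ne.
  have := ltn_ord i; lia.
elim=> [_ i|m IH lm i].
  by rewrite orbF => /eqP ->; rewrite expr0 mul1r -trAR.
have lm' : (m <= N.+1)%N by lia.
have mono : Sc ^+ m * Rad ^+ 2 <= Sc ^+ m.+1 * Rad ^+ 2.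
  rewrite ler_wpM2r // exprS ler_peMl // exprn_ge0 //; lra.
case/orP => [im|]; first by apply: le_trans mono; apply: IH => //; rewrite im.
rewrite ltnS leq_eqVlt => /orP [/eqP im|im]; last first.
  by apply: le_trans mono; apply: IH => //; rewrite im orbT.
have mN : (m < N.+1)%N by lia.
pose k := Ordinal mN.
have -> : i = widen_ord (leqnSn _) k by apply: val_inj.
apply: le_trans (quad mu0 muL k F) _.
have QB := Qbound sG pG' (x := hvec H k) (D := Sc ^+ m * Rad ^+ 2).
have QB' : bil G (hvec H k) (hvec H k) <= sk k * (Sc ^+ m * Rad ^+ 2).
  apply: QB => j /hvec_supp [->|jk]; apply: IH => //; first by rewrite eqxx.
  by rewrite jk orbT.
have skS : (L + mu) ^+ 2 * sk k <= Sc.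
  rewrite /Sc (bigD1 k) //= mulrDr.
  have : 0 <= (L + mu) ^+ 2 * \sum_(j < N.+1 | j != k) sk j.
    by rewrite mulr_ge0 ?sqr_ge0 // sumr_ge0 // => j _; exact: sqr_ge0.
  lra.
have X0 : 0 <= Sc ^+ m * Rad ^+ 2 by rewrite mulr_ge0 // exprn_ge0 //; lra.
apply: le_trans (ler_wpM2l (sqr_ge0 _) QB') _.
rewrite [Sc ^+ m.+1]exprS -mulrA [X in X <= _]mulrA; exact: ler_wpM2r.
Qed.
End D.
Section F.
Variables (R : realType) (n : nat).
Lemma trace_abs (G A : 'M[R]_n) D : (forall i j, `|G i j| <= D) ->
  `|\tr (G *m A)| <= D * \sum_i \sum_j `|A j i|.
Proof.
move=> hD; rewrite /mxtrace big_distrr /=.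
apply: le_trans (ler_norm_sum _ _ _) _; apply: ler_sum => i _.
rewrite mxE big_distrr /=; apply: le_trans (ler_norm_sum _ _ _) _.
apply: ler_sum => j _; rewrite normrM ler_wpM2r //.
Qed.
End F.

Section E.
Variables (R : realType) (N : nat) (mu L Rad : R) (H : 'M[R]_N).
Hypotheses (mu0 : 0 <= mu) (muL : mu < L) (Rad0 : 0 <= Rad).

Definition Db := Sc mu L H ^+ N.+1 * Rad ^+ 2.
Definition sa (A : 'M[R]_N.+2) := \sum_i \sum_j `|A j i|.
Definition Fb := Db * \sum_(k < N.+1) (sa (Amat mu L H None (Some k))
   + sa (Amat mu L H (Some k) None)).

Lemma entry_bound G f : sdp_feasible mu L Rad H G f -> forall i j, `|G i j| <= Db.
Proof.
move=> F i j; have [sG pG _ _] := F.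
have pG' : forall x, 0 <= bil G x x by [].
apply: le_trans (offdiag sG pG' i j) _.
have := diag_bound mu0 muL Rad0 F i; have := diag_bound mu0 muL Rad0 F j; rewrite /Db; lra.
Qed.

Lemma sa_ge0 A : 0 <= sa A.
Proof. by apply: sumr_ge0 => i _; apply: sumr_ge0 => j _. Qed.

Lemma aux_abs (x t1 t2 B1 B2 : R) : x + t1 <= 0 -> - x + t2 <= 0 ->
  `|t1| <= B1 -> `|t2| <= B2 -> `|x| <= B1 + B2.
Proof.
rewrite !ler_norml => h1 h2 /andP[a1 b1] /andP[a2 b2]; apply/andP; split; lra.
Qed.

Lemma f_bound G f : sdp_feasible mu L Rad H G f -> forall k, `|f k 0| <= Fb.
Proof.
move=> F k; have [_ _ C _] := F; have EB := entry_bound F.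
have C1 := C None (Some k); have C2 := C (Some k) None.
rewrite /= subr0 in C1; rewrite /= sub0r in C2.
have T1 := trace_abs (Amat mu L H None (Some k)) EB.
have T2 := trace_abs (Amat mu L H (Some k) None) EB.
have Db0 : 0 <= Db by apply: le_trans (EB ord0 ord0).
apply: le_trans (aux_abs C1 C2 T1 T2) _.
rewrite -mulrDr /Fb ler_wpM2l // (bigD1 k) //= lerDl.
by apply: sumr_ge0 => j _; rewrite addr_ge0 // sa_ge0.
Qed.
End E.

Local Open Scope classical_set_scope.

Section Top.
Variables (R : realType) (p : nat).
Notation T := 'rV[R]_p.

Lemma contD (f g : T -> R) : continuous f -> continuous g ->
  continuous (fun v => f v + g v).
Proof. move=> cf cg x; exact: (continuousD (cf x) (cg x)). Qed.

Lemma contM (f g : T -> R) : continuous f -> continuous g ->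
  continuous (fun v => f v * g v).
Proof. move=> cf cg x; exact: (continuousM (cf x) (cg x)). Qed.

Lemma contC (c : R) : continuous (fun _ : T => c).
Proof. by move=> x; apply: cst_continuous. Qed.

Lemma contS (I : Type) (r : seq I) (F : I -> T -> R) :
  (forall i, continuous (F i)) -> continuous (fun v => \sum_(i <- r) F i v).
Proof.
move=> hF; elim: r => [|i r IH].
  by under eq_fun do rewrite big_nil; exact: contC.
by under eq_fun do rewrite big_cons; exact: contD.
Qed.

Lemma contcoord i : continuous (fun v : T => v 0 i).
Proof. exact: coord_continuous. Qed.

Lemma closed_le0 (f : T -> R) : continuous f -> closed [set v | f v <= 0].
Proof.
move=> cf; apply: (@preimage_closed _ _ f [set x : R | x <= 0]).
  by move=> x _; exact: cf.
exact: closed_le.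
Qed.
End Top.

Section Main.
Variables (R : realType) (N : nat).
Notation n1 := (N.+2 * N.+2)%N.
Notation V := 'rV[R]_(n1 + N.+1).

Definition decG (v : V) : 'M[R]_N.+2 := vec_mx (lsubmx v).
Definition decf (v : V) : 'cV[R]_N.+1 := (rsubmx v)^T.
Definition enc (G : 'M[R]_N.+2) (f : 'cV[R]_N.+1) : V := row_mx (mxvec G) f^T.

Lemma decG_enc G f : decG (enc G f) = G.
Proof. by rewrite /decG /enc row_mxKl mxvecK. Qed.
Lemma decf_enc G f : decf (enc G f) = f.
Proof. by rewrite /decf /enc row_mxKr trmxK. Qed.

Lemma cont_decG i j : continuous (fun v => decG v i j).
Proof.
rewrite /decG; under eq_fun do rewrite !mxE.
exact: contcoord.
Qed.

Lemma cont_decf k : continuous (fun v => decf v k 0).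
Proof.
rewrite /decf; under eq_fun do rewrite !mxE.
exact: contcoord.
Qed.

Lemma trE n (G A : 'M[R]_n) : \tr (G *m A) = \sum_i \sum_j G i j * A j i.
Proof. by apply: eq_bigr => i _; rewrite mxE. Qed.

Lemma cont_tr (A : 'M[R]_N.+2) : continuous (fun v => \tr (decG v *m A)).
Proof.
under eq_fun do rewrite trE.
apply: contS => i; apply: contS => j; apply: contM; [exact: cont_decG | exact: contC].
Qed.

Lemma cont_trl (A : 'M[R]_N.+2) : continuous (fun v => \tr (A *m decG v)).
Proof.
under eq_fun do rewrite trE.
apply: contS => i; apply: contS => j; apply: contM; [exact: contC | exact: cont_decG].
Qed.

Lemma cont_bil x : continuous (fun v => bil (decG v) x x).
Proof.
under eq_fun do rewrite bilE.
apply: contS => i; apply: contS => j; apply: contM; last exact: contC.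
apply: contM; [exact: contC | exact: cont_decG].
Qed.

Lemma cont_fI o : continuous (fun v => fI (decf v) o).
Proof. case: o => [k|] /=; [exact: cont_decf | exact: contC]. Qed.

Lemma contN (f : V -> R) : continuous f -> continuous (fun v => - f v).
Proof. by move=> cf x; apply: continuousN; exact: cf. Qed.

Lemma closed_all (I : Type) (P : I -> set V) :
  (forall i, closed (P i)) -> closed [set v | forall i, P i v].
Proof.
move=> hP; have -> : [set v | forall i, P i v] = \bigcap_(i in [set: I]) P i.
  by apply/seteqP; split => v /= h i //; apply: h.
by apply: closed_bigI => i _; exact: hP.
Qed.

Variables (mu L Rad : R) (H : 'M[R]_N).

Definition Aset := [set v : V | sdp_feasible mu L Rad H (decG v) (decf v)].

Lemma Aset_closed : closed Aset.
Proof.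
have -> : Aset =
  [set v | forall ij : 'I_N.+2 * 'I_N.+2, decG v ij.2 ij.1 - decG v ij.1 ij.2 <= 0]
  `&` ([set v | forall x : 'cV[R]_N.+2, - bil (decG v) x x <= 0]
  `&` ([set v | forall ij : option 'I_N.+1 * option 'I_N.+1,
          fI (decf v) ij.2 - fI (decf v) ij.1 + \tr (decG v *m Amat mu L H ij.1 ij.2) <= 0]
  `&` [set v | \tr (decG v *m ARmat R N) - Rad ^+ 2 <= 0])).
  apply/seteqP; split => v /=.
    case=> sG pG C AR; split; [|split; [|split]].
    - move=> [i j] /=; by rewrite -{1}sG mxE subrr.
    - by move=> x; rewrite oppr_le0; exact: pG.
    - by move=> [i j]; exact: C.
    - by rewrite subr_le0.
  case=> S1 [S2 [S3 S4]]; split.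
  - apply/matrixP => i j; rewrite mxE; apply/eqP; rewrite eq_le.
    by have := S1 (i, j); have := S1 (j, i); rewrite /= !subr_le0 => -> ->.
  - by move=> x; have := S2 x; rewrite oppr_le0.
  - by move=> i j; exact: (S3 (i, j)).
  - by move: S4; rewrite subr_le0.
apply: closedI.
  apply: closed_all => ij; apply: closed_le0.
  by apply: contD; [exact: cont_decG | apply: contN; exact: cont_decG].
apply: closedI.
  by apply: closed_all => x; apply: closed_le0; apply: contN; exact: cont_bil.
apply: closedI.
  apply: closed_all => ij; apply: closed_le0.
  apply: contD; [apply: contD; [exact: cont_fI| apply: contN; exact: cont_fI] |exact: cont_tr].
by apply: closed_le0; apply: contD; [exact: cont_tr | exact: contC].
Qed.

Hypotheses (mu0 : 0 <= mu) (muL : mu < L) (Rad0 : 0 <= Rad).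

Lemma Aset_bounded : bounded_set Aset.
Proof.
have Db0 : 0 <= Db mu L Rad H.
  by rewrite /Db mulr_ge0 // ?sqr_ge0 // exprn_ge0 //; have := Sc_ge1 mu L H; lra.
have Fb0 : 0 <= Fb mu L Rad H.
  rewrite /Fb mulr_ge0 // sumr_ge0 // => k _; by rewrite addr_ge0 // sa_ge0.
exists (Db mu L Rad H + Fb mu L Rad H); split; first exact: num_real.
move=> M hM v /= Av.
have EB := entry_bound mu0 muL Rad0 Av.
have FB := f_bound mu0 muL Rad0 Av.
rewrite [leLHS]/Num.norm /= mx_normrE; apply: bigmax_le; first lra.
move=> [i k] _ /=; rewrite (ord1 i).
apply: (le_trans _ (ltW hM)).
case: (splitP k) => [j jE|j jE].
  have -> : k = lshift _ j by apply: val_inj.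
  have -> : v 0 (lshift _ j) = lsubmx v 0 j by rewrite mxE.
  rewrite -(vec_mxK (lsubmx v)); clear jE; case/mxvec_indexP: j => a c.
  rewrite mxvecE; apply: le_trans (EB a c) _; lra.
have -> : k = rshift _ j by apply: val_inj.
have -> : v 0 (rshift _ j) = decf v j 0 by rewrite !mxE.
apply: le_trans (FB j) _; lra.
Qed.

Lemma Aset_nonempty : Aset (enc 0 0).
Proof.
rewrite /Aset /= decG_enc decf_enc; split.
- by rewrite /sym_mx trmx0.
- by move=> x; rewrite mulmx0 mul0mx mxE.
- by move=> i j; rewrite mul0mx mxtrace0 addr0; case: i; case: j => * /=; rewrite ?mxE subrr.
- by rewrite mul0mx mxtrace0 sqr_ge0.
Qed.
End Main.

Unset Implicit Arguments.
Theorem proposition1 (R : realType) (mu L Rad : R) (N : nat)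
    (H : 'M[R]_N) (b : 'cV[R]_N.+1) (C : 'M[R]_N.+2) :
  0 <= mu -> mu < L -> (1 <= N)%N -> 0 <= Rad ->
  fixed_step H -> sym_mx C ->
  exists (G : 'M[R]_N.+2) (f : 'cV[R]_N.+1),
    sdp_feasible mu L Rad H G f /\
    (forall (G' : 'M[R]_N.+2) (f' : 'cV[R]_N.+1),
        sdp_feasible mu L Rad H G' f' -> sdp_obj b C G' f' <= sdp_obj b C G f).
Proof.
move=> mu0 muL _ Rad0 _ _.
pose obj := fun v => sdp_obj b C (decG v) (decf v).
have cobj : continuous obj.
  rewrite /obj /sdp_obj; apply: contD; last exact: cont_trl.
  apply: contS => i; apply: contM; [exact: contC | exact: cont_decf].
have A0 : Aset mu L Rad H !=set0 by exists (enc 0 0); exact: Aset_nonempty.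
have cA := bounded_closed_compact (Aset_bounded H mu0 muL Rad0) (@Aset_closed _ _ mu L Rad H).
have [c cin cmax] := EVT_max_rV A0 cA (continuous_subspaceT cobj).
exists (decG c), (decf c); split; first by move: cin; rewrite inE.
move=> G' f' F'.
have := cmax (enc G' f'); rewrite /obj decG_enc decf_enc; apply.
by rewrite inE /Aset /= decG_enc decf_enc.
Qed.
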